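(* Let $H$ be a finite graph with edges $e_1,\dots,e_m$. For each edge $e_i$ let $\theta_{e_i}\colon\{0,1\}^m\to\{0,1\}^m$ be the map flipping the $i$-th coordinate and fixing all others. Let $H'$ be the graph with vertex set $V(H)\times\{0,1\}^m$ and edge set $\{\{(u,\mathbf x),(v,\theta_{uv}(\mathbf x))\}: uv\in E(H),\ \mathbf x\in\{0,1\}^m\}$. If $H$ contains a cycle, then the girth of $H'$ is at least twice the girth of $H$.
   Context: The girth of a graph is the length of its shortest cycle (infinite if the graph is acyclic). *)

(* Defs.v *)
From mathcomp Require Import all_boot.
Set Implicit Arguments. Unset Strict Implicit. Unset Printing Implicit Defensive.

(* A finite simple graph: vertex type T : finType, adjacency e : rel T,
   assumed symmetric and irreflexive in the theorem. *)

Definition has_cycle_len (T : finType) (e : rel T) (k : nat) : bool :=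
  [exists t : k.-tuple T, [&& 2 < k, uniq t & cycle e t]].

(* girth: length of a shortest cycle; None = infinite (acyclic).
   Cycles have length <= #|T| (distinct vertices), so searching 0..#|T|
   suffices; since iota starts at 0, the index found is the length. *)
Definition girth (T : finType) (e : rel T) : option nat :=
  let n := find (has_cycle_len e) (iota 0 #|T|.+1) in
  if n <= #|T| then Some n else None.

Definition ge_ext (o : option nat) (n : nat) : Prop :=
  if o is Some g then n <= g else True.

Definition edgeset (T : finType) (e : rel T) : {set {set T}} :=
  [set [set x.1; x.2] | x in [set x : T * T | e x.1 x.2]].

(* Coordinates of {0,1}^E(H) are indexed by the edges of H themselves. *)
Notation edge_t e := {A : {set _} | A \in edgeset e}.

Definition theta (T : finType) (e : rel T) (u v : T)
    (x : {ffun edge_t e -> bool}) : {ffun edge_t e -> bool} :=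
  [ffun f => x f (+) (val f == [set u; v])].
Arguments theta {T} e u v x.

Definition lift_rel (T : finType) (e : rel T) :
    rel (T * {ffun edge_t e -> bool}) :=
  fun p q => e p.1 q.1 && (q.2 == theta e p.1 q.1 p.2).
Arguments lift_rel {T} e.

(* Main.v *)
Require Import Defs.
From mathcomp Require Import all_boot zify.
Set Implicit Arguments. Unset Strict Implicit. Unset Printing Implicit Defensive.

Lemma girth_some (T : finType) (r : rel T) n : girth r = Some n -> has_cycle_len r n.
Proof.
rewrite /girth; case: ifP => // Hle [<-].
have Hhas : has (has_cycle_len r) (iota 0 #|T|.+1) by rewrite has_find size_iota ltnS.
by have := nth_find 0 Hhas; rewrite nth_iota ?add0n // ltnS.
Qed.

Lemma girth_min (T : finType) (r : rel T) g c : girth r = Some g -> has_cycle_len r c -> g <= c.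
Proof.
rewrite /girth; set n := find _ _; case: ifP => // Hle [<-] Hc.
rewrite leqNgt; apply/negP => Hlt.
have := before_find 0 Hlt; rewrite nth_iota ?add0n ?Hc //.
by rewrite ltnS (leq_trans (ltnW Hlt) Hle).
Qed.

Lemma cycle_mkseq (T : eqType) (r : rel T) (f : nat -> T) n :
  0 < n -> (forall k, k < n -> r (f k) (f k.+1)) -> f n = f 0 -> cycle r (mkseq f n).
Proof.
case: n => // n _ Hr Hn.
rewrite /mkseq /= -[in rcons _ _]Hn.
have -> : rcons [seq f i | i <- iota 1 n] (f n.+1) = [seq f i | i <- iota 1 n.+1].
  by rewrite -cats1 -(addn1 n) iotaD map_cat add1n addn1.
apply/(pathP (f 0)) => k; rewrite size_map size_iota => Hk.
have -> : f 0 :: [seq f i | i <- iota 1 n.+1] = [seq f i | i <- iota 0 n.+2] by [].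
rewrite (nth_map 0); last by rewrite size_iota ltnS ltnW.
rewrite (nth_map 0); last by rewrite size_iota.
rewrite !nth_iota ?ltnS ?(ltnW Hk) // add0n add1n.
exact: Hr.
Qed.

Lemma parity (T : finType) (e : rel T) (L : nat) (P : nat -> T * {ffun edge_t e -> bool})
 (HA : forall k, k < L -> lift_rel e (P k) (P k.+1))
 (HB : P L = P 0) K : K < L ->
 ~~ odd (count (fun m => [set (P m).1; (P m.+1).1] == [set (P K).1; (P K.+1).1]) (iota 0 L)).
Proof.
move=> HK.
have Hmem : [set (P K).1; (P K.+1).1] \in edgeset e.
  apply/imsetP; exists ((P K).1, (P K.+1).1) => //.
  by rewrite inE /=; case/andP: (HA K HK).
pose f : edge_t e := exist (fun A => A \in edgeset e) _ Hmem.
have H n : n <= L -> (P n).2 f = (P 0).2 f (+) odd (count (fun m => [set (P m).1; (P m.+1).1] == val f) (iota 0 n)).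
  elim: n => [|n IH] Hn; first by rewrite /= addbF.
  have /andP[_ /eqP ->] := HA n Hn.
  rewrite /theta ffunE (IH (ltnW Hn)) -(addn1 n) iotaD count_cat add0n.
  rewrite [count _ [:: n]]/count addn0 oddD oddb addbA.
  by rewrite [_ == \val f]eq_sym addn1.
move: (H L (leqnn L)); rewrite HB => /(congr1 (addb ((P 0).2 f))).
by rewrite addbA addbb /= => <-.
Qed.

Lemma core (T : finType) (e : rel T) (e_irr : irreflexive e) (L : nat)
 (P : nat -> T * {ffun edge_t e -> bool})
 (HL : 2 < L)
 (HA : forall k, k < L -> lift_rel e (P k) (P k.+1))
 (HB : P L = P 0)
 (HC : forall a b, a < L -> b < L -> P a = P b -> a = b) :
 exists2 c, has_cycle_len e c & 2 * c <= L.
Proof.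
pose u k := (P k).1.
have He k : k < L -> e (u k) (u k.+1) by move/HA/andP=> [].
pose Q j := (j <= L) && [exists a : 'I_j, u a == u j].
have Qex : exists j, Q j.
  exists L; rewrite /Q leqnn /=; apply/existsP; exists (Ordinal (ltnW (ltnW HL))).
  by rewrite /u HB.
case: (ex_minnP Qex) => j /andP[HjL /existsP[[i Hij] /= /eqP Huij]] Hmin.
have Hinj a b : a < j -> b < j -> u a = u b -> a = b.
  wlog Hab : a b / a < b.
    move=> W Ha Hb Hu; case: (ltngtP a b) => // H.
    - exact: W.
    - by apply/esym/W.
  move=> Ha Hb Hu; have : Q b.
    rewrite /Q (ltnW (leq_trans Hb HjL)) /=; apply/existsP; exists (Ordinal Hab); exact/eqP.
  by move/Hmin; rewrite leqNgt Hb.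
have HiL : i < L := leq_trans Hij HjL.
case: (ltngtP j i.+2) => Hj.
- have Hj1 : j = i.+1 by lia.
  by move: (He i HiL); rewrite Huij Hj1 e_irr.
- set c := j - i.
  have Hc3 : 2 < c by rewrite /c; lia.
  have HijK k : k < c -> i + k < j by rewrite /c; lia.
  pose f k := u (i + k).
  have Hc : has_cycle_len e c.
    have Hsz : size (mkseq f c) == c by rewrite size_mkseq.
    apply/existsP; exists (Tuple Hsz); apply/and3P; split => //.
    - rewrite /= /mkseq map_inj_in_uniq ?iota_uniq // => a b.
      rewrite !mem_iota !add0n => Ha Hb /Hinj Hu.
      by apply/eqP; rewrite -(eqn_add2l i) Hu // HijK.
    - apply: cycle_mkseq; first lia.
      + move=> k Hk; rewrite /f addnS; apply: He; have := HijK k Hk; lia.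
      + by rewrite /f addn0 /c subnKC ?(ltnW Hij).
  have Einj a b : i <= a < j -> i <= b < j -> [set u a; u a.+1] = [set u b; u b.+1] -> a = b.
    wlog Hab : a b / a < b.
      move=> W Ha Hb Hu; case: (ltngtP a b) => // H.
      - exact: W.
      - by apply/esym/W.
    move=> /andP[Hia Haj] /andP[Hib Hbj] HE.
    have : u a \in [set u b; u b.+1] by rewrite -HE set21.
    case/set2P => Hu.
    - have := Hinj _ _ Haj Hbj Hu; lia.
    - case: (ltngtP b.+1 j) => Hbj'; [ | lia | ].
      + have := Hinj _ _ Haj Hbj' Hu; lia.
      + have Hai : a = i by apply: Hinj => //; rewrite Hu Hbj' Huij.
        have : u a.+1 \in [set u b; u b.+1] by rewrite -HE set22.
        case/set2P => Hu2.
        * have : a.+1 = b by apply: Hinj => //; lia.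
          lia.
        * have : a.+1 = a by apply: Hinj => //; [lia | rewrite Hu2 Hbj' -Huij -Hai].
          lia.
  have Hex k : k < c -> exists m : 'I_L,
      ((m < i) || (j <= m)) && ([set u m; u m.+1] == [set u (i+k); u (i+k).+1]).
    move=> Hk; have HK := HijK k Hk; have HKL : i + k < L by lia.
    have Hp := parity HA HB HKL.
    have HL' : L = i + (c + (L - j)) by rewrite /c; lia.
    have Hic : i + c = j by rewrite /c; lia.
    move: Hp; rewrite {1}HL' iotaD add0n iotaD Hic !count_cat.
    have -> : count (fun m => [set (P m).1; (P m.+1).1] == [set (P (i + k)).1; (P (i + k).+1).1]) (iota i c) = 1.
      rewrite (@eq_in_count _ _ (pred1 (i + k))); last first.
        move=> m; rewrite mem_iota => Hm /=; apply/eqP/eqP => [H|->] //.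
        by apply: Einj => //; apply/andP; split; lia.
      rewrite count_uniq_mem ?iota_uniq // mem_iota.
      by have -> : (i <= i + k < i + c) = true by apply/andP; split; lia.
    move=> Hodd.
    have : has (fun m => [set (P m).1; (P m.+1).1] == [set (P (i + k)).1; (P (i + k).+1).1]) (iota 0 i ++ iota j (L - j)).
      rewrite has_count count_cat.
      move: Hodd.
      generalize (count (fun m => [set (P m).1; (P m.+1).1] == [set (P (i + k)).1; (P (i + k).+1).1]) (iota 0 i)).
      generalize (count (fun m => [set (P m).1; (P m.+1).1] == [set (P (i + k)).1; (P (i + k).+1).1]) (iota j (L - j))).
      by move=> x y; case: x => [|x]; case: y => [|y]; rewrite ?addn0 ?addnS.
    case/hasP => m; rewrite mem_cat !mem_iota => Hm Hpm.
    have HmL : m < L by lia.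
    exists (Ordinal HmL); rewrite /= Hpm andbT; lia.
  pose psi (k : 'I_c) : 'I_L := Ordinal (leq_trans (HijK k (ltn_ord k)) HjL).
  pose phi (k : 'I_c) : 'I_L := xchoose (Hex k (ltn_ord k)).
  pose chi (s : 'I_c + 'I_c) : 'I_L := match s with inl k => psi k | inr k => phi k end.
  have Hphi k : ((phi k < i) || (j <= phi k)) && ([set u (phi k); u (phi k).+1] == [set u (i+k); u (i+k).+1]).
    exact: (xchooseP (Hex k (ltn_ord k))).
  have Hchi : injective chi.
    case=> [a|a] [b|b] /= H.
    - congr inl; apply: val_inj; move/(congr1 val): H => /= /eqP; rewrite eqn_add2l => /eqP //.
    - exfalso; move: (Hphi b) => /andP[H1 _]; rewrite -H /= in H1.
      have := HijK a (ltn_ord a); lia.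
    - exfalso; move: (Hphi a) => /andP[H1 _]; rewrite H /= in H1.
      have := HijK b (ltn_ord b); lia.
    - congr inr; apply: val_inj.
      move: (Hphi a) (Hphi b) => /andP[_ /eqP E1] /andP[_ /eqP E2].
      rewrite H E2 in E1.
      have : i + b = i + a.
        apply: Einj => //; apply/andP; split; try lia.
        + exact: HijK (ltn_ord b).
        + exact: HijK (ltn_ord a).
      move/eqP; rewrite eqn_add2l => /eqP //.
  exists c => //.
  by have := @leq_card _ _ chi Hchi; rewrite card_sum !card_ord; lia.
- have HiL1 : i.+1 < L by lia.
  have Hx : (P j).2 = (P i).2.
    have /andP[_ /eqP H1] := HA i HiL.
    have /andP[_ /eqP H2] := HA i.+1 HiL1.
    rewrite Hj H2 H1; apply/ffunP => f; rewrite /theta !ffunE -addbA.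
    have -> : [set (P i.+1).1; (P i.+2).1] = [set (P i).1; (P i.+1).1].
      by rewrite -Hj -[(P j).1]/(u j) -Huij setUC.
    by rewrite addbb addbF.
  have HPj : P j = P i.
    rewrite [LHS]surjective_pairing [RHS]surjective_pairing Hx; congr pair; exact: (esym Huij).
  move: HjL; rewrite leq_eqVlt => /orP[/eqP HjL'| HjL'].
  + have Hi0 : i = 0 by apply: HC => //; [lia | rewrite -HPj HjL' HB].
    lia.
  + have Hji := HC _ _ HjL' HiL HPj; lia.
Qed.

Theorem mainTheorem8 (T : finType) (e : rel T)
    (e_sym : symmetric e) (e_irr : irreflexive e) :
  (exists k, has_cycle_len e k) ->
  forall g, girth e = Some g -> ge_ext (girth (lift_rel e)) (2 * g).
Proof.
move=> _ g Hg.
case HL: (girth (lift_rel e)) => [L|] //=.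
have /existsP[t /and3P[HL2 Hu Hc]] := girth_some HL.
have Hsz0 := size_tuple t.
case Ht: (tval t) Hsz0 Hu Hc => [|a s'] Hsz Hu Hc; first by rewrite -Hsz in HL2.
pose P k := nth a (a :: rcons s' a) k.
have HPk k : k < L -> P k = nth a (a :: s') k.
  by move=> Hk; rewrite /P -rcons_cons nth_rcons Hsz Hk.
have [c Hcyc Hc2] : exists2 c, has_cycle_len e c & 2 * c <= L.
  apply: (core e_irr (P:=P) HL2).
  - move=> k Hk; move/(pathP a): Hc => Hp; apply: Hp.
    by move: Hk; rewrite -Hsz size_rcons.
  - by rewrite /P -Hsz /= nth_rcons ltnn eqxx.
  - move=> x y Hx Hy; rewrite !HPk // => /eqP.
    by rewrite nth_uniq ?Hsz // => /eqP.
have := girth_min Hg Hcyc; lia.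
Qed.
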